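(* Let $n\ge 1$ and let $k_1,\ldots,k_n\ge 3$ be integers. The disjoint union of cycles $\bigcup_{i=1}^n C_{k_i}$ is odd prime.
   Context: All graphs are finite and simple. A graph $G$ of order $N$ is called odd prime if there is a bijection $\ell$ from $V(G)$ to the set of odd integers $\{1,3,\ldots,2N-1\}$ such that $\gcd(\ell(u),\ell(v))=1$ for every edge $uv$ of $G$. $C_k$ denotes the cycle on $k$ vertices. *)

(* Defs.v *)
From mathcomp Require Import all_boot all_order.
Set Implicit Arguments. Unset Strict Implicit. Unset Printing Implicit Defensive.

(* A simple graph is a symmetric irreflexive relation [adj] on a finType [V].
   It is odd prime if there is a bijection from V to the odd integers
   {1,3,...,2N-1} (N = #|V|) such that adjacent vertices get coprime labels.
   We encode the bijection as a bijection f : V -> 'I_N, the label of v being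
   2 * f v + 1. *)
Definition odd_label (V : finType) (f : V -> 'I_#|V|) (v : V) : nat :=
  (f v).*2.+1.

Definition odd_prime (V : finType) (adj : rel V) : Prop :=
  exists f : V -> 'I_#|V|, bijective f /\
    forall u v, adj u v -> coprime (odd_label f u) (odd_label f v).

Definition cycles_vertex (n : nat) (k : 'I_n -> nat) : finType :=
  {i : 'I_n & 'I_(k i)}.

Definition cycles_adj (n : nat) (k : 'I_n -> nat) : rel (cycles_vertex k) :=
  fun u v =>
    (tag u == tag v) &&
    ((val (tagged v) == (val (tagged u)).+1 %% k (tag u)) ||
     (val (tagged u) == (val (tagged v)).+1 %% k (tag u))).

Arguments cycles_vertex : clear implicits.
Arguments cycles_adj : clear implicits.

(* Main.v *)
Require Import Defs.
From mathcomp Require Import all_boot all_order.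
From mathcomp Require Import zify.
Set Implicit Arguments. Unset Strict Implicit. Unset Printing Implicit Defensive.

Definition kk (n : nat) (k : 'I_n -> nat) (l : nat) : nat :=
  if insub l is Some o then k o else 0.
Definition SS (n : nat) (k : 'I_n -> nat) (i : nat) : nat :=
  \sum_(0 <= l < i) kk k l.
Definition pos (k j : nat) : nat :=
  if j + j < k then j + j else (k.-1 - j) + (k.-1 - j) + 1.

Lemma pos_lt k j : j < k -> pos k j < k.
Proof. rewrite /pos; case: ifP; lia. Qed.

Lemma pos_inj k j j' : j < k -> j' < k -> pos k j = pos k j' -> j = j'.
Proof. rewrite /pos; case: ifP; case: ifP; lia. Qed.

Lemma pos_step k j : 3 <= k -> j < k ->
  let a := pos k j in let b := pos k (j.+1 %% k) in
  a = b + 1 \/ a = b + 2 \/ b = a + 1 \/ b = a + 2.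
Proof.
move=> hk hj /=.
case: (ltnP j.+1 k) => h.
  rewrite modn_small //; rewrite /pos; case: ifP; case: ifP; lia.
have -> : j.+1 = k by lia.
rewrite modnn /pos; case: ifP; case: ifP; lia.
Qed.

Lemma cop_step a b : b = a + 1 \/ b = a + 2 -> coprime a.*2.+1 b.*2.+1.
Proof.
case=> ->.
  have -> : (a + 1).*2.+1 = a.*2.+1 + 2 by rewrite -!addnn; lia.
  by rewrite /coprime gcdnDl -/(coprime _ 2) coprimen2 /= odd_double.
have -> : (a + 2).*2.+1 = a.*2.+1 + 2 ^ 2 by rewrite -!addnn; lia.
by rewrite /coprime gcdnDl -/(coprime _ (2 ^ 2)) coprimeXr // coprimen2 /= odd_double.
Qed.

Lemma cop4 a b : a = b + 1 \/ a = b + 2 \/ b = a + 1 \/ b = a + 2 ->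
  coprime a.*2.+1 b.*2.+1.
Proof.
case=> [h|[h|h]]; last by apply: cop_step.
  by rewrite coprime_sym; apply: cop_step; left.
by rewrite coprime_sym; apply: cop_step; right.
Qed.

Lemma kk_ord n (k : 'I_n -> nat) (i : 'I_n) : kk k i = k i.
Proof.
rewrite /kk; case: insubP => [o _ /val_inj -> //|]; by rewrite ltn_ord.
Qed.

Lemma SS_succ n (k : 'I_n -> nat) i : SS k i.+1 = SS k i + kk k i.
Proof. by rewrite /SS big_nat_recr. Qed.

Lemma SS_mono n (k : 'I_n -> nat) a b : a <= b -> SS k a <= SS k b.
Proof.
move=> hab; elim: b hab => [|b IH]; first by rewrite leqn0 => /eqP ->.
rewrite leq_eqVlt => /orP [/eqP -> //|]; rewrite ltnS => /IH h.
rewrite SS_succ; exact: leq_trans h (leq_addr _ _).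
Qed.

Lemma card_V n (k : 'I_n -> nat) : #|cycles_vertex n k| = SS k n.
Proof.
rewrite /cycles_vertex card_tagged sumnE big_map big_enum /= /SS big_mkord.
by apply: eq_bigr => i _; rewrite card_ord kk_ord.
Qed.

Lemma f_lt n (k : 'I_n -> nat) (v : cycles_vertex n k) :
  SS k (tag v) + pos (k (tag v)) (tagged v) < #|cycles_vertex n k|.
Proof.
rewrite card_V.
have h1 := pos_lt (ltn_ord (tagged v)).
apply: (@leq_trans (SS k (tag v).+1)); first by rewrite SS_succ kk_ord ltn_add2l.
exact: SS_mono (ltn_ord _).
Qed.

Definition ff n (k : 'I_n -> nat) (v : cycles_vertex n k) : 'I_#|cycles_vertex n k| :=
  Ordinal (f_lt v).

Lemma ff_inj n (k : 'I_n -> nat) : injective (@ff n k).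
Proof.
move=> [i j] [i' j'] /(congr1 val) /= H.
have hi : i = i'.
  apply: val_inj => /=.
  have hj := pos_lt (ltn_ord j); have hj' := pos_lt (ltn_ord j').
  case: (ltngtP i i') => // h.
    have := SS_mono k h; rewrite SS_succ kk_ord; lia.
  have := SS_mono k h; rewrite SS_succ kk_ord; lia.
subst i'.
have : val j = val j'.
  apply: (pos_inj (ltn_ord j) (ltn_ord j')); lia.
by move/val_inj => ->.
Qed.

Theorem theorem3p1 (n : nat) (k : 'I_n -> nat) :
  1 <= n -> (forall i, 3 <= k i) -> odd_prime (cycles_adj n k).
Proof.
move=> _ hk; exists (@ff n k); split.
  by apply: inj_card_bij (@ff_inj n k) _; rewrite card_ord.
move=> [i j] [i' j'] /andP [/= /eqP hi]; subst i'.
rewrite /odd_label /= => /orP [] /eqP h.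
  apply: cop4.
  have := pos_step (hk i) (ltn_ord j); rewrite -h /=; lia.
rewrite coprime_sym; apply: cop4.
have := pos_step (hk i) (ltn_ord j'); rewrite -h /=; lia.
Qed.
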